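(* Let $\mathbb{D}$ be a virtual double category. Then $\mathbb{D}$ has decomposable multicells if and only if every multicell of $\mathbb{D}$ admits essentially unique decompositions of every shape given by a tree of height $2$ with the appropriate number of leaves.
   Context: A virtual double category (VDC) has objects, tight arrows forming a category, loose arrows $x\nrightarrow y$, and $n$-ary multicells ($n\ge0$) with a composable path of $n$ loose arrows as loose source, one loose arrow as loose target and two tight arrows as tight sides, together with identity unary multicells and an associative unital composition $\frac{\alpha_1\cdots\alpha_m}{\beta}$ pasting a compatible row of multicells onto an $m$-ary multicell (whiskering by a tight arrow when $m=0$). A tree is a rooted finite planar tree all of whose leaves are at the same distance from the root; its height is the number of layers of vertices (layer 1 contains the root). For an $m$-ary multicell $\alpha$ and a tree $T$ of height $h$ with $m$ leaves, a decomposition of $\alpha$ of shape $T$ assigns to each vertex with $k$ inputs a $k$-ary multicell, such that each layer forms a compatible row of multicells, the loose targets of layer $i+1$ are in order the loose sources of layer $i$ (interface $i$), and the iterated composite is $\alpha$. A morphism $P\to Q$ of such decompositions consists of compatible rows $\sigma_i$ ($1\le i\le h-1$) of unary multicells from interface $i$ of $P$ to interface $i$ of $Q$, with $\sigma_0,\sigma_h$ identities, such that for each layer $i$, layer $i$ of $P$ followed by $\sigma_{i-1}$ equals $\sigma_i$ followed by layer $i$ of $Q$. Two decompositions are equivalent if connected by a zigzag of morphisms. $\alpha$ admits essentially unique decompositions of shape $T$ if it has at least one and any two are equivalent. $\mathbb{D}$ has decomposable multicells if every multicell admits essentially unique decompositions of every shape of every height $\ge2$ (with the right number of leaves). *)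

(* Defs.v *)
From Stdlib Require Import Relations.
From mathcomp Require Import all_boot.

Set Implicit Arguments.
Unset Strict Implicit.
Unset Printing Implicit Defensive.

(* Virtual double categories, presented essentially-algebraically:        *)
(* one type of tight arrows, one of loose arrows, one of multicells, with *)
(* boundary functions; operations are total functions constrained by the  *)
(* axioms only on well-typed (composable) inputs.                         *)

Record vdc_data := VdcData {
  Ob : Type;
  Tt : Type;
  tdom : Tt -> Ob;
  tcod : Tt -> Ob;
  tid : Ob -> Tt;
  tcomp : Tt -> Tt -> Tt;         (* diagrammatic order: f then g *)
  Lo : Type;
  ldom : Lo -> Ob;
  lcod : Lo -> Ob;
  Cell : Type;
  csrc : Cell -> seq Lo;
  ctgt : Cell -> Lo;
  cleft : Cell -> Tt;
  cright : Cell -> Tt;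
  cid : Lo -> Cell;
  ccomp : Tt -> seq Cell -> Cell -> Cell
    (* ccomp g [a_1;..;a_m] b : paste the row (g; a_1..a_m) onto b;
       g is the leftmost tight arrow of the row (relevant when m = 0,
       where the composite is the whiskering of b by g) *)
}.

Section Ops.
Variable V : vdc_data.

Fixpoint path_ok (x : Ob V) (p : seq (Lo V)) (y : Ob V) : Prop :=
  match p with
  | [::] => x = y
  | l :: p' => ldom l = x /\ path_ok (lcod l) p' y
  end.

Fixpoint row_ok (g : Tt V) (As : seq (Cell V)) : Prop :=
  match As with
  | [::] => True
  | a :: As' => cleft a = g /\ row_ok (cright a) As'
  end.

Definition row_end (g : Tt V) (As : seq (Cell V)) : Tt V :=
  last g (map (@cright V) As).

Definition composable (g : Tt V) (As : seq (Cell V)) (b : Cell V) : Prop :=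
  [/\ row_ok g As, map (@ctgt V) As = csrc b,
      tcod g = tdom (cleft b) & tcod (row_end g As) = tdom (cright b)].

Fixpoint rowcomp (g : Tt V) (As : seq (Cell V)) (Bs : seq (Cell V))
  : seq (Cell V) :=
  match Bs with
  | [::] => [::]
  | b :: Bs' =>
      let k := size (csrc b) in
      ccomp g (take k As) b :: rowcomp (row_end g (take k As)) (drop k As) Bs'
  end.

End Ops.

Record is_vdc (V : vdc_data) : Prop := IsVdc {
  tid_dom : forall x : Ob V, tdom (tid x) = x;
  tid_cod : forall x : Ob V, tcod (tid x) = x;
  tcomp_dom : forall f g : Tt V, tcod f = tdom g -> tdom (tcomp f g) = tdom f;
  tcomp_cod : forall f g : Tt V, tcod f = tdom g -> tcod (tcomp f g) = tcod g;
  tcomp_idl : forall f : Tt V, tcomp (tid (tdom f)) f = f;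
  tcomp_idr : forall f : Tt V, tcomp f (tid (tcod f)) = f;
  tcompA : forall f g h : Tt V, tcod f = tdom g -> tcod g = tdom h ->
     tcomp (tcomp f g) h = tcomp f (tcomp g h);
  cell_wt : forall a : Cell V,
     [/\ path_ok (tdom (cleft a)) (csrc a) (tdom (cright a)),
         tcod (cleft a) = ldom (ctgt a) & tcod (cright a) = lcod (ctgt a)];
  cid_src : forall l : Lo V, csrc (cid l) = [:: l];
  cid_tgt : forall l : Lo V, ctgt (cid l) = l;
  cid_left : forall l : Lo V, cleft (cid l) = tid (ldom l);
  cid_right : forall l : Lo V, cright (cid l) = tid (lcod l);
  ccomp_src : forall (g : Tt V) (As : seq (Cell V)) (b : Cell V), composable g As b ->
     csrc (ccomp g As b) = flatten (map (@csrc V) As);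
  ccomp_tgt : forall (g : Tt V) (As : seq (Cell V)) (b : Cell V), composable g As b ->
     ctgt (ccomp g As b) = ctgt b;
  ccomp_left : forall (g : Tt V) (As : seq (Cell V)) (b : Cell V), composable g As b ->
     cleft (ccomp g As b) = tcomp g (cleft b);
  ccomp_right : forall (g : Tt V) (As : seq (Cell V)) (b : Cell V), composable g As b ->
     cright (ccomp g As b) = tcomp (row_end g As) (cright b);
  ccomp_unitl : forall a : Cell V,
     ccomp (cleft a) [:: a] (cid (ctgt a)) = a;
  ccomp_unitr : forall b : Cell V,
     ccomp (tid (tdom (cleft b))) (map (@cid V) (csrc b)) b = b;
  ccompA : forall (c : Cell V) (f : Tt V) (Bs : seq (Cell V)) (g : Tt V) (As : seq (Cell V)),
     composable f Bs c -> composable g As (ccomp f Bs c) ->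
     ccomp g As (ccomp f Bs c) = ccomp (tcomp g f) (rowcomp g As Bs) c
}.

(* Trees: a tree of height h is the list of its h layers of vertices,     *)
(* layer 1 first; a layer is the list of arities (numbers of inputs) of   *)
(* its vertices, left to right.  Leaves are the inputs of layer h.        *)

Fixpoint adjP {A : Type} (R : A -> A -> Prop) (s : seq A) : Prop :=
  match s with
  | x :: ((y :: _) as s') => R x y /\ adjP R s'
  | _ => True
  end.

Fixpoint allP {A : Type} (P : A -> Prop) (s : seq A) : Prop :=
  match s with
  | [::] => True
  | x :: s' => P x /\ allP P s'
  end.

Definition tree := seq (seq nat).

Definition is_tree (T : tree) : Prop :=
  [/\ (match T with [::] => False | l1 :: _ => size l1 = 1 end),
      allP (fun l => 0 < size l) T
    & adjP (fun l l' => sumn l = size l') T].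

Definition height (T : tree) : nat := size T.
Definition leaves (T : tree) : nat := sumn (last [::] T).

Section Decomp.
Variable V : vdc_data.

Definition arity (a : Cell V) : nat := size (csrc a).

Definition crow (L : seq (Cell V)) : Prop :=
  match L with [::] => True | a :: _ => row_ok (cleft a) L end.

Definition compL (L : seq (Cell V)) (b : Cell V) : Cell V :=
  match L with [::] => b | a :: _ => ccomp (cleft a) L b end.
Definition rowcompL (L : seq (Cell V)) (Bs : seq (Cell V)) : seq (Cell V) :=
  match L with [::] => [::] | a :: _ => rowcomp (cleft a) L Bs end.

Definition is_decomp (alpha : Cell V) (T : tree) (D : seq (seq (Cell V))) : Prop :=
  [/\ map (map arity) D = T,
      allP crow D,
      adjP (fun Li Li1 => map (@ctgt V) Li1 = flatten (map (@csrc V) Li)) D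
    & (match D with
       | [:: root] :: rest => foldl (fun b L => compL L b) root rest = alpha
       | _ => False
       end)].

(* a morphism P -> Q of decompositions of alpha: sigma lists the rows
   sigma_1, ..., sigma_{h-1} (each with its leftmost tight arrow). *)
Definition is_decomp_mor (alpha : Cell V) (P Q : seq (seq (Cell V)))
    (sigma : seq (Tt V * seq (Cell V))) : Prop :=
  let h := size P in
  let sig0 := (tid (ldom (ctgt alpha)), [:: cid (ctgt alpha)]) in
  let sigh := (tid (tdom (cleft alpha)), map (@cid V) (csrc alpha)) in
  [/\ size sigma = h.-1,
      allP (fun x : (seq (Cell V) * seq (Cell V)) * (Tt V * seq (Cell V)) =>
              let: ((Pi, Qi), (g, s)) := x in
              [/\ row_ok g s, allP (fun c => arity c = 1) s,
                  flatten (map (@csrc V) s) = flatten (map (@csrc V) Pi)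
                & map (@ctgt V) s = flatten (map (@csrc V) Qi)])
           (zip (zip (take h.-1 P) (take h.-1 Q)) sigma)
    & allP (fun x : (seq (Cell V) * seq (Cell V)) *
                    ((Tt V * seq (Cell V)) * (Tt V * seq (Cell V))) =>
              let: ((Pi, Qi), (slo, shi)) := x in
              rowcompL Pi slo.2 = rowcomp shi.1 shi.2 Qi)
           (zip (zip P Q) (zip (sig0 :: sigma) (rcons sigma sigh)))].

Definition decomp_arrow (alpha : Cell V) (T : tree) (P Q : seq (seq (Cell V))) : Prop :=
  [/\ is_decomp alpha T P, is_decomp alpha T Q
    & exists sigma, is_decomp_mor alpha P Q sigma].

Definition decomp_equiv (alpha : Cell V) (T : tree) :=
  clos_refl_sym_trans _ (decomp_arrow alpha T).

Definition ess_unique_decomp (alpha : Cell V) (T : tree) : Prop :=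
  (exists P, is_decomp alpha T P) /\
  (forall P Q, is_decomp alpha T P -> is_decomp alpha T Q -> decomp_equiv alpha T P Q).

Definition has_decomposable_multicells : Prop :=
  forall (alpha : Cell V) (T : tree),
    is_tree T -> 2 <= height T -> leaves T = arity alpha ->
    ess_unique_decomp alpha T.

End Decomp.

(* Main.v *)
Require Import Defs.
From Stdlib Require Import Relations.
From mathcomp Require Import all_boot.

Set Implicit Arguments.
Unset Strict Implicit.
Unset Printing Implicit Defensive.

Section Proof.
Variable V : vdc_data.
Hypothesis HV : is_vdc V.

Lemma path_last x p y : path_ok x p y -> y = last x (map (@lcod V) p).
Proof. by elim: p x => [|l p IH] x /= ; [| case=> _ /IH]. Qed.

Lemma tcod_row_end (g : Tt V) As : row_ok g As ->
  tcod (row_end g As) = last (tcod g) (map (fun a => lcod (ctgt a)) As).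
Proof.
elim: As g => [|a As IH] g //= [Hg Hr].
rewrite -/(row_end (cright a) As) IH //.
by case: (cell_wt HV a) => _ _ ->.
Qed.

Lemma comp_lemma (g : Tt V) As b : row_ok g As -> map (@ctgt V) As = csrc b ->
  tcod g = tdom (cleft b) -> composable g As b.
Proof.
move=> Hr Hm Hg; split => //.
rewrite tcod_row_end // Hg.
have -> : map (fun a => lcod (ctgt a)) As = map (@lcod V) (csrc b) by rewrite -Hm -map_comp.
by case: (cell_wt HV b) => /path_last <-.
Qed.

Lemma comp_lemma_ne (g : Tt V) a As b : row_ok g (a :: As) -> map (@ctgt V) (a :: As) = csrc b ->
  composable g (a :: As) b.
Proof.
move=> Hr Hm; apply: comp_lemma => //.
case: Hr => <- _.
case: (cell_wt HV a) => _ -> _.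
case: (cell_wt HV b) => + _ _.
by rewrite -Hm /= => -[].
Qed.

Lemma row_ok_ids x p y : path_ok x p y -> row_ok (tid x) (map (@cid V) p).
Proof.
elim: p x => [|l p IH] x //= [Hl Hp]; split.
  by rewrite (cid_left HV) Hl.
by rewrite (cid_right HV); apply: IH.
Qed.

Lemma row_end_ids x p y : path_ok x p y -> row_end (tid x) (map (@cid V) p) = tid y.
Proof.
elim: p x => [|l p IH] x /=; first by move=> ->.
case=> _ Hp; rewrite /row_end /= -/(row_end _ _) (cid_right HV).
exact: IH.
Qed.

Lemma rowcomp_idr (g : Tt V) Q : row_ok g Q ->
  rowcomp (tid (tdom g)) (map (@cid V) (flatten (map (@csrc V) Q))) Q = Q.
Proof.
elim: Q g => [|q Q IH] g //= [<- Hr].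
rewrite map_cat take_size_cat ?size_map // drop_size_cat ?size_map //.
rewrite (ccomp_unitr HV); congr (_ :: _).
case: (cell_wt HV q) => Hp _ _.
rewrite (row_end_ids Hp); exact: IH.
Qed.

Lemma rowcomp_idl (g : Tt V) Q : row_ok g Q ->
  rowcomp g Q (map (@cid V) (map (@ctgt V) Q)) = Q.
Proof.
elim: Q g => [|q Q IH] g //= [Hg Hr].
rewrite (cid_src HV) /= take0 drop0 -Hg (ccomp_unitl HV); congr (_ :: _).
exact: IH.
Qed.


Lemma row_ok_cat (g : Tt V) A B : row_ok g (A ++ B) -> row_ok g A /\ row_ok (row_end g A) B.
Proof.
elim: A g => [|a A IH] g //= [Hg Hr].
by case: (IH _ Hr).
Qed.

Lemma allP_cat {T : Type} (P : T -> Prop) A B : Defs.allP P (A ++ B) -> Defs.allP P A /\ Defs.allP P B.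
Proof. elim: A => [|a A IH] //= [Ha /IH[]] //. Qed.

Lemma size_flat_unary (s : seq (Cell V)) : Defs.allP (fun c => arity c = 1) s ->
  size (flatten (map (@csrc V) s)) = size s.
Proof. elim: s => [|a s IH] //= [Ha /IH Hs]; by rewrite size_cat Hs -/(arity a) Ha. Qed.

Lemma rowcompP (g : Tt V) s h Bs : row_ok g s -> Defs.allP (fun c => arity c = 1) s ->
  map (@ctgt V) s = flatten (map (@csrc V) Bs) -> row_ok h Bs -> tcod g = tdom h ->
  [/\ map (@arity V) (rowcomp g s Bs) = map (@arity V) Bs,
      flatten (map (@csrc V) (rowcomp g s Bs)) = flatten (map (@csrc V) s),
      map (@ctgt V) (rowcomp g s Bs) = map (@ctgt V) Bs
    & row_ok (tcomp g h) (rowcomp g s Bs)].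
Proof.
elim: Bs g s h => [|b Bs IH] g s h Hr Hu Hm Hh Hg.
  by case: s Hm {Hr Hu} => //.
case: Hh => Hh Hh'; subst h.
rewrite /=.
set k := size (csrc b).
have Hs := cat_take_drop k s.
have Hm1 : map (@ctgt V) (take k s) = csrc b.
  by rewrite map_take Hm /= take_size_cat.
have Hm2 : map (@ctgt V) (drop k s) = flatten (map (@csrc V) Bs).
  by rewrite map_drop Hm /= drop_size_cat.
have := @row_ok_cat g (take k s) (drop k s); rewrite Hs => /(_ Hr) [Hr1 Hr2].
have := @allP_cat _ (fun c : Cell V => arity c = 1) (take k s) (drop k s); rewrite Hs => /(_ Hu) [Hu1 Hu2].
have Hc := comp_lemma Hr1 Hm1 Hg.
have Hc' := Hc; case: Hc' => _ _ _ Hend.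
case: (IH _ _ _ Hr2 Hu2 Hm2 Hh' Hend) => I1 I2 I3 I4.
split.
- rewrite /= I1; congr (_ :: _).
  by rewrite /arity (ccomp_src HV Hc) size_flat_unary // -(size_map (@ctgt V)) Hm1.
- by rewrite /= I2 (ccomp_src HV Hc) -flatten_cat -map_cat Hs.
- by rewrite /= I3 (ccomp_tgt HV Hc).
- by rewrite /= (ccomp_left HV Hc) (ccomp_right HV Hc).
Qed.

Definition adjrel := (fun Li Li1 : seq (Cell V) => map (@ctgt V) Li1 = flatten (map (@csrc V) Li)).

Fixpoint chainok (c : Cell V) (R : seq (seq (Cell V))) : Prop :=
  match R with
  | [::] => True
  | L :: R' => [/\ 0 < size L, crow L, map (@ctgt V) L = csrc c & chainok (compL L c) R']
  end.

Lemma compLP a L (c : Cell V) : crow (a :: L) -> map (@ctgt V) (a :: L) = csrc c ->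
  composable (cleft a) (a :: L) c.
Proof. move=> H1 H2; exact: comp_lemma_ne. Qed.

Lemma compL_src L (c : Cell V) : 0 < size L -> crow L -> map (@ctgt V) L = csrc c ->
  csrc (compL L c) = flatten (map (@csrc V) L) /\ ctgt (compL L c) = ctgt c.
Proof.
case: L => // a L _ H1 H2; have Hc := compLP H1 H2.
by rewrite /= (ccomp_src HV Hc) (ccomp_tgt HV Hc).
Qed.

Lemma chain_ne c R : chainok c R -> 0 < size R -> 0 < size (csrc c).
Proof. by case: R => //= L R [Hs _ Hm _] _; rewrite -Hm size_map. Qed.

Lemma chain_tgt c R : chainok c R -> ctgt (foldl (fun b L => compL L b) c R) = ctgt c.
Proof.
elim: R c => [|L R IH] c //= [H0 H1 H2 H3].
by rewrite IH //; case: (compL_src H0 H1 H2).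
Qed.

Lemma adj_chain c Lp rest : csrc c = flatten (map (@csrc V) Lp) ->
  adjP adjrel (Lp :: rest) -> Defs.allP (@crow V) rest -> Defs.allP (fun L => 0 < size L) rest ->
  chainok c rest.
Proof.
elim: rest c Lp => [|L rest IH] c Lp //= Hc [HL Hadj] [Hcr Hcrs] [Hs Hss].
have HL' : map (@ctgt V) L = csrc c by rewrite Hc.
split => //.
apply: (IH _ L) => //.
by case: (compL_src Hs Hcr HL').
Qed.

Lemma chain_adj c Lp rest : chainok c rest -> csrc c = flatten (map (@csrc V) Lp) ->
  adjP adjrel (Lp :: rest) /\ Defs.allP (@crow V) rest.
Proof.
elim: rest c Lp => [|L rest IH] c Lp //= [Hs Hcr HL Hch] Hc.
have [Hc1 _] := compL_src Hs Hcr HL.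
have [A1 A2] := IH _ L Hch Hc1.
by split; [split => //; rewrite /adjrel HL Hc | split].
Qed.

Lemma allP_nonempty {A B : Type} (f : A -> B) D :
  Defs.allP (fun l => 0 < size l) (map (map f) D) -> Defs.allP (fun L => 0 < size L) D.
Proof. elim: D => [|L D IH] //= [H1 /IH H2]; by rewrite size_map in H1. Qed.

Lemma decomp_chainE alpha T D : Defs.allP (fun l => 0 < size l) T ->
  (is_decomp alpha T D <-> exists r rest, [/\ D = [:: r] :: rest, map (map (@arity V)) D = T,
      chainok r rest & foldl (fun b L => compL L b) r rest = alpha]).
Proof.
move=> HT; split.
  case=> Hsh Hcr Hadj.
  case: D Hsh Hcr Hadj => [|[|r [|? ?]] rest] //= Hsh [_ Hcr] Hadj Hf.
  exists r, rest; split => //.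
  apply: (adj_chain (Lp := [:: r])) => //=; first by rewrite cats0.
  by rewrite -Hsh in HT; case: HT => _ /allP_nonempty.
case=> r [rest [-> Hsh Hch Hf]]; split => //.
- have [_ H] := chain_adj (Lp := [:: r]) Hch (esym (cats0 _)).
  by split => //=.
- by have [H _] := chain_adj (Lp := [:: r]) Hch (esym (cats0 _)).
Qed.

Definition sig0 (c : Cell V) := (tid (ldom (ctgt c)), [:: cid (ctgt c)]).
Definition idc (c : Cell V) := (tid (tdom (cleft c)), map (@cid V) (csrc c)).

Definition rowcond (Pi Qi : seq (Cell V)) (x : Tt V * seq (Cell V)) : Prop :=
  let: (g, s) := x in
  [/\ row_ok g s, Defs.allP (fun c => arity c = 1) s,
      flatten (map (@csrc V) s) = flatten (map (@csrc V) Pi)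
    & map (@ctgt V) s = flatten (map (@csrc V) Qi)].

Definition layercond (Pi Qi : seq (Cell V)) (slo shi : Tt V * seq (Cell V)) : Prop :=
  rowcompL Pi slo.2 = rowcomp shi.1 shi.2 Qi.

Fixpoint mor_chain (slo shi : Tt V * seq (Cell V)) (P Q : seq (seq (Cell V)))
   (sigma : seq (Tt V * seq (Cell V))) {struct sigma} : Prop :=
  match sigma, P, Q with
  | [::], [:: P1], [:: Q1] => layercond P1 Q1 slo shi
  | s1 :: sig', P1 :: P', Q1 :: Q' =>
      [/\ rowcond P1 Q1 s1, layercond P1 Q1 slo s1 & mor_chain s1 shi P' Q' sig']
  | _, _, _ => False
  end.

Lemma mor_gen sigma slo shi (P Q : seq (seq (Cell V))) :
  size P = (size sigma).+1 -> size Q = (size sigma).+1 ->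
  (Defs.allP (fun x : (seq (Cell V) * seq (Cell V)) * (Tt V * seq (Cell V)) =>
              let: ((Pi, Qi), (g, s)) := x in
              [/\ row_ok g s, Defs.allP (fun c => arity c = 1) s,
                  flatten (map (@csrc V) s) = flatten (map (@csrc V) Pi)
                & map (@ctgt V) s = flatten (map (@csrc V) Qi)])
           (zip (zip (take (size sigma) P) (take (size sigma) Q)) sigma)
   /\ Defs.allP (fun x : (seq (Cell V) * seq (Cell V)) *
                    ((Tt V * seq (Cell V)) * (Tt V * seq (Cell V))) =>
              let: ((Pi, Qi), (slo, shi)) := x in
              rowcompL Pi slo.2 = rowcomp shi.1 shi.2 Qi)
           (zip (zip P Q) (zip (slo :: sigma) (rcons sigma shi))))
  <-> mor_chain slo shi P Q sigma.
Proof.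
elim: sigma slo P Q => [|s1 sig IH] slo P Q.
  case: P => [|P1 [|? ?]] //; case: Q => [|Q1 [|? ?]] //= _ _.
  by split; [case=> _ [] | move=> H; split].
case: P => [|P1 P] //; case: Q => [|Q1 Q] //= [HP] [HQ].
have := IH s1 P Q HP HQ.
case: s1 => g s /= [IH1 IH2].
split.
  by case=> [[A1 A2] [B1 B2]]; split => //; apply: IH1.
by case=> A1 B1 /IH2 [A2 B2].
Qed.

Lemma mor_iff c (P Q : seq (seq (Cell V))) sigma :
  size P = (size sigma).+1 -> size Q = size P ->
  is_decomp_mor c P Q sigma <-> mor_chain (sig0 c) (idc c) P Q sigma.
Proof.
move=> HP HQ; have HQ' : size Q = (size sigma).+1 by rewrite HQ.
have [G1 G2] := mor_gen (sig0 c) (idc c) HP HQ'.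
rewrite /is_decomp_mor HP /=.
split; first by case=> _ A B; apply: G1; split.
by move/G2 => [A B]; split.
Qed.

Lemma flatten_ids (p : seq (Lo V)) : flatten (map (@csrc V) (map (@cid V) p)) = p.
Proof. elim: p => [|l p IH] //=; by rewrite (cid_src HV) IH. Qed.

Lemma unary_ids (p : seq (Lo V)) : Defs.allP (fun c => arity c = 1) (map (@cid V) p).
Proof. elim: p => [|l p IH] //=; by rewrite /arity (cid_src HV). Qed.

Lemma rowcond_idc P Q (c : Cell V) : flatten (map (@csrc V) P) = csrc c ->
  flatten (map (@csrc V) Q) = csrc c -> rowcond P Q (idc c).
Proof.
move=> HP HQ; split.
- by case: (cell_wt HV c) => /row_ok_ids.
- exact: unary_ids.
- by rewrite flatten_ids HP.
- rewrite HQ; elim: (csrc c) => [|l p IH] //=.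
  by rewrite (cid_tgt HV) IH.
Qed.

Lemma layer_id (c : Cell V) L : 0 < size L -> crow L -> map (@ctgt V) L = csrc c ->
  layercond L L (idc c) (idc (compL L c)).
Proof.
case: L => // a L _ Hcr Hm.
have Hc := compLP Hcr Hm.
have E := rowcomp_idr Hcr.
have -> : idc (compL (a :: L) c) =
   (tid (tdom (cleft a)), map (@cid V) (flatten (map (@csrc V) (a :: L)))).
  rewrite /idc /compL (ccomp_left HV Hc) (ccomp_src HV Hc).
  by case: Hc => _ _ Hg _; rewrite (tcomp_dom HV Hg).
rewrite /layercond E.
by rewrite /idc /= -Hm rowcomp_idl.
Qed.

Fixpoint idchain (c : Cell V) (R : seq (seq (Cell V))) : seq (Tt V * seq (Cell V)) :=
  match R with
  | [::] => [::]
  | L :: R' => idc c :: idchain (compL L c) R'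
  end.

Lemma size_idchain c R : size (idchain c R) = size R.
Proof. by elim: R c => [|L R IH] c //=; rewrite IH. Qed.

Lemma idtail R (c : Cell V) L : chainok c (L :: R) ->
  mor_chain (idc c) (idc (foldl (fun b L => compL L b) c (L :: R))) (L :: R) (L :: R)
    (idchain (compL L c) R).
Proof.
elim: R c L => [|L2 R IH] c L /= [Hs Hcr Hm Hch].
  exact: layer_id.
have [Hc1 _] := compL_src Hs Hcr Hm.
split.
- by apply: rowcond_idc.
- exact: layer_id.
- exact: (IH (compL L c) L2 Hch).
Qed.

Definition fl := (fun (b : Cell V) (L : seq (Cell V)) => compL L b).

Lemma arity_compL (B : seq (Cell V)) a : 0 < size B -> crow B -> map (@ctgt V) B = csrc a ->
  arity (compL B a) = sumn (map (@arity V) B).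
Proof.
move=> H1 H2 H3; have [E _] := compL_src H1 H2 H3.
by rewrite /arity E size_flatten /shape -map_comp.
Qed.

Section Step.
Variables (k : nat) (L2 : seq nat) (RT : tree).
Hypothesis HT : is_tree ([:: [:: k], L2 & RT]).
Hypothesis HRT : 0 < size RT.

Let T := [:: [:: k], L2 & RT].
Let T' := [:: sumn L2] :: RT.
Let T2 := [:: [:: k]; L2].

Lemma HTne : Defs.allP (fun l => 0 < size l) T.
Proof. by case: HT. Qed.

Lemma HT'ne : Defs.allP (fun l => 0 < size l) T'.
Proof. by case: HT => _ /= [_ [_ H]] _. Qed.

Lemma HT2ne : Defs.allP (fun l => 0 < size l) T2.
Proof. by case: HT => _ /= [_ [H _]] _. Qed.

Lemma unpackT (alpha : Cell V) P : is_decomp alpha T P -> exists a B R,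
  [/\ P = [:: a] :: B :: R, arity a = k, map (@arity V) B = L2, map (map (@arity V)) R = RT
    & chainok a (B :: R) /\ foldl fl a (B :: R) = alpha].
Proof.
move/(decomp_chainE _ _ HTne) => [a [rest [-> Hsh Hch Hf]]].
case: rest Hsh Hch Hf => [|B R] //= [H1 H2 H3] Hch Hf.
by exists a, B, R; split.
Qed.

Lemma packT (alpha a : Cell V) B R : arity a = k -> map (@arity V) B = L2 -> map (map (@arity V)) R = RT ->
  chainok a (B :: R) -> foldl fl a (B :: R) = alpha -> is_decomp alpha T ([:: a] :: B :: R).
Proof.
move=> H1 H2 H3 H4 H5; apply/(decomp_chainE _ _ HTne).
by exists a, (B :: R); split => //=; rewrite H1 H2 H3.
Qed.

Lemma unpackT' (alpha : Cell V) X : is_decomp alpha T' X -> exists r R,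
  [/\ X = [:: r] :: R, arity r = sumn L2, map (map (@arity V)) R = RT,
      chainok r R & foldl fl r R = alpha].
Proof.
move/(decomp_chainE _ _ HT'ne) => [r [R [-> Hsh Hch Hf]]].
case: Hsh => H1 H2.
by exists r, R.
Qed.

Lemma packT' (alpha r : Cell V) R : arity r = sumn L2 -> map (map (@arity V)) R = RT ->
  chainok r R -> foldl fl r R = alpha -> is_decomp alpha T' ([:: r] :: R).
Proof.
move=> H1 H2 H3 H4; apply/(decomp_chainE _ _ HT'ne).
by exists r, R; split => //=; rewrite H1 H2.
Qed.

Lemma unpackT2 (r : Cell V) X : is_decomp r T2 X -> exists a B,
  [/\ X = [:: [:: a]; B], arity a = k, map (@arity V) B = L2,
      chainok a [:: B] & compL B a = r].
Proof.
move/(decomp_chainE _ _ HT2ne) => [a [rest [-> Hsh Hch Hf]]].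
case: rest Hsh Hch Hf => [|B [|? ?]] //= [H1 H2] Hch Hf.
by exists a, B.
Qed.

Lemma packT2 (r a : Cell V) B : arity a = k -> map (@arity V) B = L2 ->
  chainok a [:: B] -> compL B a = r -> is_decomp r T2 [:: [:: a]; B].
Proof.
move=> H1 H2 H3 H4; apply/(decomp_chainE _ _ HT2ne).
by exists a, [:: B]; split => //=; rewrite H1 H2.
Qed.

Lemma merge_decomp (alpha a : Cell V) B R : is_decomp alpha T ([:: a] :: B :: R) ->
  is_decomp alpha T' ([:: compL B a] :: R).
Proof.
move/unpackT => [a' [B' [R' [E Ha HB HR [[Hs Hcr Hm Hch] Hf]]]]]; case: E => -> -> ->.
apply: packT' => //.
by rewrite arity_compL // HB.
Qed.

Lemma lift_arrow2 (alpha r : Cell V) R X Y : decomp_arrow r T2 X Y -> chainok r R ->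
  foldl fl r R = alpha -> map (map (@arity V)) R = RT ->
  decomp_arrow alpha T (X ++ R) (Y ++ R).
Proof.
move=> [DX DY [sigma Hmor]] Hch Hf HR.
move: DX DY Hmor => /unpackT2 [a [B [-> Ha HB HcX HrX]]] /unpackT2 [a' [B' [-> Ha' HB' HcY HrY]]] Hmor.
have Hsig : size sigma = 1 by case: Hmor.
case: sigma Hsig Hmor => [|s1 [|? ?]] // _ Hmor.
move/(@mor_iff r [:: [:: a]; B] [:: [:: a']; B'] [:: s1] (erefl _) (erefl _)): Hmor => /= [Hrow Hl1 Hl2].
split.
- apply: packT => //; last by rewrite /= -Hf -HrX.
  by case: HcX => H1 H2 H3 _ /=; split => //; rewrite HrX.
- apply: packT => //; last by rewrite /= -Hf -HrY.
  by case: HcY => H1 H2 H3 _ /=; split => //; rewrite HrY.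
exists (s1 :: idchain r R).
apply/mor_iff => /=; first by rewrite size_idchain.
  by [].
have Et : ctgt alpha = ctgt r by rewrite -Hf chain_tgt.
have -> : sig0 alpha = sig0 r by rewrite /sig0 Et.
case: R Hch Hf HR => [|L3 R'] Hch Hf HR; first by move: HRT; rewrite -HR.
split => //.
split => //=.
- apply: rowcond_idc.
  + by case: HcX => Hs Hcr Hm _; rewrite -HrX; case: (compL_src Hs Hcr Hm).
  + by case: HcY => Hs Hcr Hm _; rewrite -HrY; case: (compL_src Hs Hcr Hm).
- rewrite -Hf; exact: idtail.
Qed.

Lemma HT2tree : is_tree T2.
Proof. case: HT => _ HA /= [H _]; split => //. exact: HT2ne. Qed.

Lemma HT'tree : is_tree T'.
Proof.
case: HT => _ _ /= [_ H]; split => //; first exact: HT'ne.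
rewrite /T'.
case: RT H HRT => [|L3 RT'] //= [H1 H2] _; split => //.
by rewrite addn0.
Qed.

Lemma leavesT' : leaves T' = leaves T.
Proof. by rewrite /leaves /T' /T; case: RT HRT. Qed.

Lemma root_eq (x c : Cell V) : ctgt x = ctgt c -> rowcompL [:: x] (sig0 c).2 = [:: x].
Proof.
by move=> E; rewrite /rowcompL /= (cid_src HV) /= -E (ccomp_unitl HV).
Qed.

Lemma layer_root (a c : Cell V) : ctgt a = ctgt c -> layercond [:: a] [:: a] (sig0 c) (idc a).
Proof.
move=> E; rewrite /layercond root_eq //.
have H : row_ok (cleft a) [:: a] by [].
have := rowcomp_idr H; rewrite /= cats0 => ->.
by [].
Qed.

Section H2.
Hypothesis H2 : forall (alpha : Cell V) (T : tree), is_tree T -> height T = 2 ->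
  leaves T = arity alpha -> ess_unique_decomp alpha T.

Lemma same_merge (alpha a : Cell V) B a' B' R :
  is_decomp alpha T ([:: a] :: B :: R) -> is_decomp alpha T ([:: a'] :: B' :: R) ->
  compL B a = compL B' a' ->
  decomp_equiv alpha T ([:: a] :: B :: R) ([:: a'] :: B' :: R).
Proof.
move=> /unpackT [a0 [B0 [R0 [E Ha HB HR [Hch Hf]]]]]; case: E => ? ? ?; subst a0 B0 R0.
move=> /unpackT [a0 [B0 [R0 [E Ha' HB' _ [Hch' Hf']]]]]; case: E => ? ? ?; subst a0 B0 R0.
move=> Er.
set r := compL B a.
case: Hch => Hs Hcr Hm HchR.
case: Hch' => Hs' Hcr' Hm' _.
have d1 : is_decomp r T2 [:: [:: a]; B] by apply: packT2.
have d2 : is_decomp r T2 [:: [:: a']; B'] by apply: packT2.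
have Hl : leaves T2 = arity r by rewrite /r arity_compL // HB.
have [_ U] := H2 HT2tree (erefl _) Hl.
have Z := U _ _ d1 d2.
have G : forall X Y, clos_refl_sym_trans _ (decomp_arrow r T2) X Y ->
   (is_decomp r T2 X <-> is_decomp r T2 Y) /\
   (is_decomp r T2 X -> decomp_equiv alpha T (X ++ R) (Y ++ R)).
  move=> X Y; elim => {X Y}.
  - move=> X Y Har; split; first by case: Har.
    move=> _; apply: rst_step; exact: lift_arrow2 Har HchR Hf HR.
  - by move=> X; split => // _; apply: rst_refl.
  - move=> X Y _ [I1 I2]; split; first by split => /I1.
    by move=> dY; apply: rst_sym; apply: I2; apply/I1.
  - move=> X Y W _ [I1 I2] _ [J1 J2]; split; first by split => [/I1/J1|/J1/I1].
    move=> dX; apply: rst_trans (I2 dX) (J2 _); exact/I1.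
exact: (G _ _ Z).2 d1.
Qed.

Lemma lift_exists (alpha : Cell V) X : is_decomp alpha T' X ->
  exists a B R, is_decomp alpha T ([:: a] :: B :: R) /\ X = [:: compL B a] :: R.
Proof.
move=> /unpackT' [r [R [-> Har HR Hch Hf]]].
have Hl : leaves T2 = arity r by rewrite Har.
have [[Y dY] _] := H2 HT2tree (erefl _) Hl.
move: dY => /unpackT2 [a [B [_ Ha HB Hc Hr]]].
exists a, B, R; split; last by rewrite Hr.
apply: packT => //; last by rewrite /= -Hf -Hr.
by case: Hc => H1 H3 H4 _ /=; split => //; rewrite Hr.
Qed.

Lemma arrow_lift (alpha a : Cell V) B R a' B' R' :
  decomp_arrow alpha T' ([:: compL B a] :: R) ([:: compL B' a'] :: R') ->
  is_decomp alpha T ([:: a] :: B :: R) -> is_decomp alpha T ([:: a'] :: B' :: R') ->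
  decomp_equiv alpha T ([:: a] :: B :: R) ([:: a'] :: B' :: R').
Proof.
move=> [_ _ [sigma Hmor]] DP DQ.
have DP' := DP; have DQ' := DQ.
move: DP' => /unpackT [a0 [B0 [R0 [E Ha HB HR [Hch Hf]]]]]; case: E => ? ? ?; subst a0 B0 R0.
move: DQ' => /unpackT [a0 [B0 [R0 [E Ha' HB' HR' [Hch' Hf']]]]]; case: E => ? ? ?; subst a0 B0 R0.
case: Hch => Hs Hcr Hm HchR.
case: Hch' => Hs' Hcr' Hm' HchR'.
case: B' Hmor DQ Hs' Hcr' Hm' HB' HchR' Hf' => // b1 B'r Hmor DQ _ Hcr' Hm' HB' HchR' Hf'.
set x := compL B a in Hmor HchR Hf.
set y := compL (b1 :: B'r) a' in Hmor HchR' Hf'.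
have EsR : size R = size RT by rewrite -HR size_map.
have EsR' : size R' = size RT by rewrite -HR' size_map.
have Hsig : size sigma = size R by case: Hmor.
have Hmc : mor_chain (sig0 alpha) (idc alpha) ([:: x] :: R) ([:: y] :: R') sigma.
  by apply/mor_iff => //=; rewrite ?Hsig // EsR EsR'.
case: sigma Hsig Hmc {Hmor} => [|[g s] sr] Hsig.
  by move: HRT; rewrite -EsR -Hsig.
move=> /= [[Hrok Hun Hfl Hmt] Hl1 Hmr].
have Etx : ctgt x = ctgt alpha by rewrite -Hf /= chain_tgt.
have Eta' : ctgt a' = ctgt alpha by rewrite -Hf' chain_tgt //; split.
have HcB' := compLP Hcr' Hm'.
have Ecy : csrc y = flatten (map (@csrc V) (b1 :: B'r)) by rewrite /y /= (ccomp_src HV HcB').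
rewrite /= cats0 in Hmt.
have Hsne : 0 < size s.
  by rewrite -(size_map (@ctgt V)) Hmt; apply: (chain_ne HchR'); rewrite EsR'.
case: s Hsig Hsne Hrok Hun Hfl Hmt Hl1 Hmr => // s1 sr' Hsig _ Hrok Hun Hfl Hmt Hl1 Hmr.
set s := s1 :: sr' in Hsig Hrok Hun Hfl Hmt Hl1 Hmr *.
have Hcy : composable g s y by apply: comp_lemma_ne.
have Exy : x = ccomp g s y.
  move: Hl1; rewrite /layercond root_eq // /=.
  have -> : size (csrc y) = size s by rewrite -Hmt size_map.
  by rewrite take_size => -[].
have Exm : x = ccomp (tcomp g (cleft b1)) (rowcomp g s (b1 :: B'r)) a'.
  by rewrite Exy -(ccompA HV HcB').
have Hg : tcod g = tdom (cleft b1).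
  case: Hcy => _ _ -> _; rewrite /y /= (ccomp_left HV HcB').
  by case: HcB' => _ _ Hq _; rewrite (tcomp_dom HV Hq).
have Hmt2 : map (@ctgt V) s = flatten (map (@csrc V) (b1 :: B'r)) by rewrite Hmt Ecy.
have [Ra Rf Rt Rr] := rowcompP Hrok Hun Hmt2 Hcr' Hg.
set B2 := rowcomp g s (b1 :: B'r) in Exm Ra Rf Rt Rr.
have EB2def : B2 = rowcomp g s (b1 :: B'r) by [].
clearbody B2.
have HsB2 : 0 < size B2 by rewrite -(size_map (@arity V)) Ra.
case EB2 : B2 HsB2 Rr => [|c1 B2r] // _ Rr.
have Ec1 : cleft c1 = tcomp g (cleft b1) by case: Rr.
have ExB2 : compL B2 a' = x by rewrite EB2 /= Ec1 -EB2 Exm.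
have dP2 : is_decomp alpha T ([:: a'] :: B2 :: R).
  apply: packT => //; [by rewrite Ra | | ].
  2: by rewrite -Hf; change (foldl fl (compL B2 a') R = foldl fl (compL B a) R); rewrite ExB2.
  rewrite /=; split.
  - by rewrite EB2.
  - by rewrite EB2; case: Rr => _ H; split.
  - by rewrite Rt.
  - by rewrite ExB2.
apply: rst_trans (same_merge DP dP2 _) _; first by rewrite ExB2.
apply: rst_step; split => //.
exists (idc a' :: (g, s) :: sr).
apply/mor_iff => /=; first by rewrite -Hsig.
  by rewrite EsR EsR'.
split.
- have H := @rowcond_idc [:: a'] [:: a'] a'; rewrite /= cats0 in H; rewrite cats0; exact: H.
- exact: layer_root.
split => //.
change (rowcompL B2 (map (@cid V) (csrc a')) = rowcomp g s (b1 :: B'r)).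
  rewrite -EB2def -Hm' -Rt EB2.
  by apply: rowcomp_idl; case: Rr.
Qed.

Lemma step_ok (alpha : Cell V) : ess_unique_decomp alpha T' -> ess_unique_decomp alpha T.
Proof.
move=> [[X dX] U]; split.
  by have [a [B [R [dP _]]]] := lift_exists dX; exists ([:: a] :: B :: R).
move=> P Q dP dQ.
have dP' := dP; have dQ' := dQ.
move: dP' => /unpackT [a [B [R [EP _ _ _ _]]]]; subst P.
move: dQ' => /unpackT [a' [B' [R' [EQ _ _ _ _]]]]; subst Q.
have Z := U _ _ (merge_decomp dP) (merge_decomp dQ).
have G : forall X Y, decomp_equiv alpha T' X Y ->
   (is_decomp alpha T' X <-> is_decomp alpha T' Y) /\
   (forall a B R a' B' R', is_decomp alpha T ([:: a] :: B :: R) ->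
      is_decomp alpha T ([:: a'] :: B' :: R') -> X = [:: compL B a] :: R ->
      Y = [:: compL B' a'] :: R' ->
      decomp_equiv alpha T ([:: a] :: B :: R) ([:: a'] :: B' :: R')).
  move=> X0 Y0; elim => {X0 Y0}.
  - move=> X0 Y0 Har; split; first by case: Har.
    move=> a1 B1 R1 a2 B2 R2 d1 d2 E1 E2; subst X0 Y0; exact: arrow_lift.
  - move=> X0; split => // a1 B1 R1 a2 B2 R2 d1 d2 -> [E1 E2]; subst R2.
    exact: same_merge.
  - move=> X0 Y0 _ [I1 I2]; split; first by split => /I1.
    move=> a1 B1 R1 a2 B2 R2 d1 d2 E1 E2; apply: rst_sym; exact: I2.
  - move=> X0 Y0 W _ [I1 I2] _ [J1 J2]; split; first by split => [/I1/J1|/J1/I1].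
    move=> a1 B1 R1 a2 B2 R2 d1 d2 E1 E2.
    have dX0 : is_decomp alpha T' X0 by rewrite E1; exact: merge_decomp.
    have [a3 [B3 [R3 [d3 E3]]]] := lift_exists (proj1 I1 dX0).
    apply: rst_trans (I2 _ _ _ _ _ _ d1 d3 E1 E3) (J2 _ _ _ _ _ _ d3 d2 E3 E2).
exact: (G _ _ Z).2 _ _ _ _ _ _ dP dQ erefl erefl.
Qed.

End H2.

End Step.

Lemma main_ind (H2 : forall (alpha : Cell V) (T : tree), is_tree T -> height T = 2 ->
  leaves T = arity alpha -> ess_unique_decomp alpha T) :
  forall n (alpha : Cell V) (T : tree), is_tree T -> height T = n.+2 ->
    leaves T = arity alpha -> ess_unique_decomp alpha T.
Proof.
elim=> [|n IH] alpha T HT Hh Hl; first exact: H2.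
case: T HT Hh Hl => [|l1 [|L2 RT]] // HT Hh Hl.
have Hl1 : size l1 = 1 by case: HT.
case: l1 Hl1 HT Hh Hl => [|k [|? ?]] // _ HT Hh Hl.
have HRT : 0 < size RT by move: Hh; rewrite /height /= => -[->].
apply: (step_ok HT HRT H2).
apply: IH.
- exact: (HT'tree HT HRT).
- by move: Hh; rewrite /height /= => -[->].
- by rewrite (leavesT' k L2 HRT).
Qed.

End Proof.

Unset Implicit Arguments.

Theorem corollary4p11 (V : vdc_data) (HV : is_vdc V) :
  has_decomposable_multicells V <->
  (forall (alpha : Cell V) (T : tree),
     is_tree T -> height T = 2 -> leaves T = arity alpha ->
     ess_unique_decomp alpha T).
Proof.
split.
  by move=> H alpha T HT Hh Hl; apply: H => //; rewrite Hh.
move=> H2 alpha T HT Hh Hl.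
have E : height T = (height T - 2).+2 by rewrite -addn2 subnK.
exact: (main_ind HV H2 HT E Hl).
Qed.
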